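(* Let $G$ be a group acting on a set $X$ and $f:\mathcal{P}_{\mathrm{fin}}(X)\to\mathbb{R}$ a $G$-invariant submodular function such that the minimum $m=\min_{Y\in\mathcal{P}_{\mathrm{fin}}(X),\,Y\neq\emptyset}f(Y)$ exists. Let $\mathcal{A}$ be the set of atoms for $f$ and $\mathcal{C}(X)=\bigcup_{Y_0\in\mathcal{A}}Y_0$ (the core of $X$). Then: (0) for every atom $Y_0$ and every $g\in G$, $g\cdot Y_0$ is an atom and either $g\cdot Y_0=Y_0$ or $g\cdot Y_0\cap Y_0=\emptyset$; distinct atoms are disjoint; (1) $G$ acts on $\mathcal{A}$ by $(g,Y_0)\mapsto g\cdot Y_0$; (2) $g\cdot\mathcal{C}(X)=\mathcal{C}(X)$ for all $g\in G$, so $\mathcal{C}(X)$, the disjoint union of the atoms, is a disjoint union of $G$-orbits in $X$; (3) for any atom $Y_0$ and any $y_0\in Y_0$ one has $G_{y_0}\subset G_{Y_0}$; and for any $G$-orbit $\mathcal{O}$ and atom $Y_0$, either $\mathcal{O}\cap Y_0=\emptyset$ or, for any $y_0\in\mathcal{O}\cap Y_0$, $\mathcal{O}\cap Y_0=\{g\cdot y_0\mid g\in G_{Y_0}\}$ and the map $gG_{y_0}\mapsto g\cdot y_0$ is a bijection from $G_{Y_0}/G_{y_0}$ onto $\mathcal{O}\cap Y_0$. Furthermore, when the action of $G$ on $X$ is transitive, $\mathcal{C}(X)=X$, i.e. each element of $X$ belongs to an atom (and the atoms partition $X$).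
   Context: $\mathcal{P}_{\mathrm{fin}}(X)$ is the set of finite subsets of $X$. $f$ is submodular if $f(Y\cap Z)+f(Y\cup Z)\leq f(Y)+f(Z)$ for all finite $Y,Z\subset X$, and $G$-invariant if $f(g\cdot Y)=f(Y)$ for all $g\in G$, where $g\cdot Y=\{g\cdot y\mid y\in Y\}$. A fragment for $f$ is a nonempty finite $Y\subset X$ with $f(Y)=m$; an atom is a fragment of minimum cardinality among fragments. $G_{y}=\{g\in G\mid g\cdot y=y\}$ and $G_Y=\{g\in G\mid g\cdot Y=Y\}$. *)

(* Defs.v *)
From HB Require Import structures.
From mathcomp Require Import all_boot.
From mathcomp Require Import finmap.
From Stdlib Require Import Reals.

Set Implicit Arguments.
Unset Strict Implicit.
Unset Printing Implicit Defensive.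

Local Open Scope fset_scope.

Definition is_group {G : Type} (mul : G -> G -> G) (one : G) (inv : G -> G) : Prop :=
  (forall a b c, mul a (mul b c) = mul (mul a b) c) /\
  (forall a, mul one a = a) /\ (forall a, mul a one = a) /\
  (forall a, mul (inv a) a = one) /\ (forall a, mul a (inv a) = one).

Definition is_group_action {G X : Type} (mul : G -> G -> G) (one : G)
    (act : G -> X -> X) : Prop :=
  (forall x, act one x = x) /\ (forall g h x, act (mul g h) x = act g (act h x)).

Definition act_set {G : Type} {X : choiceType} (act : G -> X -> X) (g : G)
    (Y : {fset X}) : {fset X} := [fset act g y | y in Y].

Definition submodular {X : choiceType} (f : {fset X} -> R) : Prop :=
  forall Y Z : {fset X}, (f (Y `&` Z) + f (Y `|` Z) <= f Y + f Z)%R.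

Definition G_invariant {G : Type} {X : choiceType} (act : G -> X -> X)
    (f : {fset X} -> R) : Prop :=
  forall g Y, f (act_set act g Y) = f Y.

Definition is_min_nonempty {X : choiceType} (f : {fset X} -> R) (m : R) : Prop :=
  (exists Y : {fset X}, Y != fset0 /\ f Y = m) /\
  (forall Y : {fset X}, Y != fset0 -> (m <= f Y)%R).

Definition fragment {X : choiceType} (f : {fset X} -> R) (m : R) (Y : {fset X}) : Prop :=
  Y != fset0 /\ f Y = m.

Definition atom {X : choiceType} (f : {fset X} -> R) (m : R) (Y : {fset X}) : Prop :=
  fragment f m Y /\ (forall Z, fragment f m Z -> #|` Y| <= #|` Z|).

Definition core {X : choiceType} (f : {fset X} -> R) (m : R) (x : X) : Prop :=
  exists Y0, atom f m Y0 /\ x \in Y0.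

Definition is_orbit {G X : Type} (act : G -> X -> X) (O : X -> Prop) : Prop :=
  exists x, forall z, O z <-> exists g, act g x = z.

(* Main.v *)
Require Import Defs.
From HB Require Import structures.
From mathcomp Require Import all_boot.
From mathcomp Require Import finmap.
From Stdlib Require Import Reals Lra Classical.
Local Open Scope fset_scope.

Lemma mem_act (G : Type) (X : choiceType) (act : G -> X -> X) g (Y : {fset X}) z :
  (z \in act_set act g Y) <-> exists2 y, y \in Y & z = act g y.
Proof. by split => [/imfsetP [y /= Hy ->]|[y Hy ->]]; [exists y|apply: in_imfset]. Qed.

Lemma card_act (G : Type) (X : choiceType) (act : G -> X -> X) g (Y : {fset X}) :
  injective (act g) -> #|` act_set act g Y| = #|` Y|.
Proof. move=> Hi; rewrite /act_set card_imfset //. Qed.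

Lemma atom_inter (X : choiceType) (f : {fset X} -> R) m (A B : {fset X}) :
  submodular f -> is_min_nonempty f m -> atom f m A -> atom f m B ->
  A `&` B != fset0 -> A = B.
Proof.
move=> Hs [_ Hm] [[A0 fA] HA] [[B0 fB] HB] AB.
have U0 : A `|` B != fset0 by rewrite fsetU_eq0 negb_and A0.
have h1 := Hs A B. have h2 := Hm _ AB. have h3 := Hm _ U0.
have fI : f (A `&` B) = m by lra.
have c1 := HA _ (conj AB fI). have c2 := HB _ (conj AB fI).
apply/eqP; rewrite eqEfsubset; apply/andP; split.
- apply/fsetIidPl; apply/eqP; rewrite eqEfcard fsubsetIl /=. done.
- apply/fsetIidPl; apply/eqP; rewrite eqEfcard fsubsetIl /= fsetIC. done.
Qed.

Lemma atom_exists (X : choiceType) (f : {fset X} -> R) m :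
  is_min_nonempty f m -> exists A, atom f m A.
Proof.
move=> [[Z [Z0 fZ]] _].
suff H : forall n (Z : {fset X}), (#|` Z| <= n)%N -> fragment f m Z -> exists A, atom f m A.
  exact: (H _ Z (leqnn _) (conj Z0 fZ)).
elim=> [|n IH] Z1 Hc Hf.
- exists Z1; split=> // W _; move: Hc; rewrite leqn0 => /eqP ->; done.
- destruct (classic (atom f m Z1)) as [Ha|Ha]; first by exists Z1.
  have [W HW] : exists W, ~ (fragment f m W -> (#|` Z1| <= #|` W|)%N).
    by apply: not_all_ex_not => H; apply: Ha; split.
  apply: (IH W); last by apply: NNPP => H; apply: HW.
  have HWf : fragment f m W by apply: NNPP => H; apply: HW.
  have : ~ (#|` Z1| <= #|` W|)%N by move=> H; apply: HW.
  move/negP; rewrite -ltnNge => H; rewrite -ltnS; exact: leq_trans H Hc.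
Qed.
Theorem mainTheorem7 (G : Type) (mul : G -> G -> G) (one : G) (inv : G -> G)
  (X : choiceType) (act : G -> X -> X) (f : {fset X} -> R) (m : R) :
  is_group mul one inv ->
  is_group_action mul one act ->
  G_invariant act f ->
  submodular f ->
  is_min_nonempty f m ->
  (* (0) *)
  (forall (Y0 : {fset X}) (g : G), atom f m Y0 ->
      atom f m (act_set act g Y0) /\
      (act_set act g Y0 = Y0 \/ act_set act g Y0 `&` Y0 = fset0)) /\
  (forall Y0 Y1 : {fset X}, atom f m Y0 -> atom f m Y1 -> Y0 <> Y1 ->
      Y0 `&` Y1 = fset0) /\
  (* (1) *)
  (forall Y0 : {fset X}, atom f m Y0 ->
      act_set act one Y0 = Y0 /\
      (forall g h : G, act_set act (mul g h) Y0 = act_set act g (act_set act h Y0))) /\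
  (* (2) *)
  (forall (g : G) (x : X), core f m (act g x) <-> core f m x) /\
  (* (3) *)
  (forall (Y0 : {fset X}) (y0 : X), atom f m Y0 -> y0 \in Y0 ->
      forall g : G, act g y0 = y0 -> act_set act g Y0 = Y0) /\
  (forall (O : X -> Prop) (Y0 : {fset X}), is_orbit act O -> atom f m Y0 ->
      (forall y, O y -> y \notin Y0) \/
      (forall y0, O y0 -> y0 \in Y0 ->
         (forall z, (O z /\ z \in Y0) <->
                    exists g, act_set act g Y0 = Y0 /\ act g y0 = z) /\
         (forall g h : G, act_set act g Y0 = Y0 -> act_set act h Y0 = Y0 ->
            (act g y0 = act h y0 <-> act (mul (inv g) h) y0 = y0)))) /\
  (* transitive case *)
  ((forall x y : X, exists g, act g x = y) -> forall x : X, core f m x).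
Proof.
move=> [mA [m1l [m1r [mVl mVr]]]] [a1 aM] Hinv Hs Hmin.
have actK : forall g x, act (inv g) (act g x) = x.
  by move=> g x; rewrite -aM mVl a1.
have actK' : forall g x, act g (act (inv g) x) = x.
  by move=> g x; rewrite -aM mVr a1.
have inj : forall g, injective (act g).
  by move=> g x y Hxy; rewrite -(actK g x) Hxy actK.
have atomg : forall Y0 g, atom f m Y0 -> atom f m (act_set act g Y0).
  move=> Y0 g [[Y00 fY] HY]; split; [split|].
  - apply/fset0Pn; case/fset0Pn: Y00 => y Hy; exists (act g y); apply/mem_act; by exists y.
  - by rewrite Hinv.
  - by move=> Z HZ; rewrite card_act //; apply: HY.
have inter : forall A B z, atom f m A -> atom f m B -> z \in A -> z \in B -> A = B.
  move=> A B z HA HB zA zB; apply: (atom_inter _ _ _ _ _ Hs Hmin HA HB).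
  by apply/fset0Pn; exists z; rewrite in_fsetI zA zB.
have stab : forall Y0 g y, atom f m Y0 -> y \in Y0 -> act g y \in Y0 -> act_set act g Y0 = Y0.
  move=> Y0 g y HY yY gyY; apply: (inter _ _ (act g y) (atomg _ g HY) HY) => //.
  by apply/mem_act; exists y.
have core_fw : forall g x, core f m x -> core f m (act g x).
  move=> g x [Y0 [HY xY]]; exists (act_set act g Y0); split; first exact: atomg.
  by apply/mem_act; exists x.
split.
  move=> Y0 g HY; split; first exact: atomg.
  case: (boolP (act_set act g Y0 `&` Y0 == fset0)) => [/eqP -> | /fset0Pn [z]]; first by right.
  rewrite in_fsetI => /andP [z1 z2]; left; exact: (inter _ _ z (atomg _ g HY) HY).
split.
  move=> Y0 Y1 H0 H1 Hne; apply/eqP; case: (boolP (Y0 `&` Y1 == fset0)) => // /fset0Pn [z].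
  by rewrite in_fsetI => /andP [z1 z2]; case: Hne; exact: (inter _ _ z H0 H1).
split.
  move=> Y0 _; split.
  - apply/fsetP => z; apply/idP/idP.
    + by move/mem_act => [y Hy ->]; rewrite a1.
    + by move=> Hz; apply/mem_act; exists z; rewrite ?a1.
  - move=> g h; apply/fsetP => z; apply/idP/idP.
    + move/mem_act => [y Hy ->]; rewrite aM; apply/mem_act; exists (act h y) => //.
      by apply/mem_act; exists y.
    + move/mem_act => [y' /mem_act [y Hy ->] ->]; apply/mem_act; exists y; rewrite ?aM //.
split.
  move=> g x; split; last exact: core_fw.
  by move=> /(core_fw (inv g)); rewrite actK.
split.
  move=> Y0 y0 HY yY g Hg; apply: (stab _ _ y0 HY yY); by rewrite Hg.
split.
  move=> O Y0 [x Hx] HY; right => y0 Oy0 y0Y; split.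
  - move=> z; split.
    + move=> [Oz zY]; have [h Hh] := proj1 (Hx z) Oz; have [k Hk] := proj1 (Hx y0) Oy0.
      have E : act (mul h (inv k)) y0 = z by rewrite aM -Hk actK.
      exists (mul h (inv k)); split => //; apply: (stab _ _ y0 HY y0Y); by rewrite E.
    + move=> [g [Hg Hz]]; split.
      * have [k Hk] := proj1 (Hx y0) Oy0; apply/(Hx z); exists (mul g k); by rewrite aM Hk.
      * by rewrite -Hg; apply/mem_act; exists y0.
  - move=> g h _ _; rewrite aM; split.
    + by move=> <-; rewrite actK.
    + by move=> E; rewrite -{1}E actK'.
move=> Htr x; have [A [[A0 fA] HA]] := atom_exists _ _ _ Hmin.
case/fset0Pn: (A0) => y yA; have [g Hg] := Htr y x.
rewrite -Hg; apply: core_fw; exists A; split => //; split => //.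
Qed.
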